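(* Let $\nu>0$ and let $U(x,t)=\sum_{i=0}^\infty\sum_{k=0}^\infty U_{i,k}x^it^k$ be a given formal power series. For every choice of complex numbers $A_{i,1,k}$ ($i,k\ge 0$) there exist unique formal power series \[u=\sum_{i\ge0}\sum_{j\ge1}\sum_{k\ge0}A_{i,j,k}x^iy^jt^k,\qquad v=\sum_{i\ge0}\sum_{j\ge1}\sum_{k\ge0}B_{i,j,k}x^iy^jt^k\] (so that $u=v=0$ at $y=0$) with the prescribed coefficients $A_{i,1,k}$, satisfying, as identities of formal power series in $x,y,t$, Prandtl's boundary layer equations \[ u\frac{\partial u}{\partial x}+v\frac{\partial u}{\partial y}+\frac{\partial u}{\partial t}=\frac{\partial U}{\partial t}+U\frac{\partial U}{\partial x}+\nu\frac{\partial^2u}{\partial y^2},\qquad \frac{\partial u}{\partial x}+\frac{\partial v}{\partial y}=0 . \] Moreover, for all $i,k\ge0$: $B_{i,1,k}=0$; \[A_{i,2,k}=-\frac{1}{2\nu}\Big(U_{i,k+1}(k+1)+\sum_{p=0}^{i}\sum_{q=0}^{k}(i-p+1)U_{p,q}U_{i-p+1,k-q}\Big);\qquad A_{i,3,k}=\frac{(k+1)A_{i,1,k+1}}{6\nu};\] $B_{i,j,k}=-\frac{i+1}{j}A_{i+1,j-1,k}$ for $j\ge2$; and for $j\ge4$, \[ A_{i,j,k}=\frac{1}{\nu j(j-1)}\Big(A_{i,j-2,k+1}(k+1)+\sum_{p=0}^{i}\sum_{q=1}^{j-3}\sum_{r=0}^{k}(i-p+1)A_{p,q,r}A_{i-p+1,j-2-q,k-r}-\sum_{p=0}^{i}\sum_{q=2}^{j-2}\sum_{r=0}^{k}\frac{(p+1)(j-1-q)}{q}A_{p+1,q-1,r}A_{i-p,j-1-q,k-r}\Big).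 \]
   Context: Here $u,v$ are the velocity components in a two-dimensional boundary layer along a wall $y=0$, $U(x,t)$ is the external (outer) flow velocity, and the pressure gradient has been eliminated using $-\frac1\rho\frac{\partial P}{\partial x}=\frac{\partial U}{\partial t}+U\frac{\partial U}{\partial x}$. In the paper, the free coefficients $A_{i,1,k}$ are intended to be fixed by matching $u$ to the external flow $U$ away from the wall. *)

(* Defs.v *)
From mathcomp Require Import all_boot all_algebra complex.
From mathcomp Require Import Rstruct.
Set Implicit Arguments. Unset Strict Implicit. Unset Printing Implicit Defensive.
Import GRing.Theory Num.Theory.
Local Open Scope ring_scope.
Local Open Scope complex_scope.

Notation Real := Rdefinitions.R.
Definition Cplx : numClosedFieldType := (Rdefinitions.R)[i].

(* A formal power series in x, y, t with complex coefficients, represented by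
   its coefficient array: f i j k is the coefficient of x^i y^j t^k. *)
Definition fps3 := nat -> nat -> nat -> Cplx.
(* A formal power series in x, t: g i k is the coefficient of x^i t^k. *)
Definition fps2 := nat -> nat -> Cplx.

Definition lift_xt (g : fps2) : fps3 :=
  fun i j k => if j == 0%N then g i k else 0.

Definition dx (f : fps3) : fps3 := fun i j k => (i.+1)%:R * f i.+1 j k.
Definition dy (f : fps3) : fps3 := fun i j k => (j.+1)%:R * f i j.+1 k.
Definition dt (f : fps3) : fps3 := fun i j k => (k.+1)%:R * f i j k.+1.

Definition fmul (f g : fps3) : fps3 := fun i j k =>
  \sum_(a < i.+1) \sum_(b < j.+1) \sum_(c < k.+1)
     f a b c * g (i - a)%N (j - b)%N (k - c)%N.

Definition fadd (f g : fps3) : fps3 := fun i j k => f i j k + g i j k.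
Definition fscale (c : Cplx) (f : fps3) : fps3 := fun i j k => c * f i j k.

Definition prandtl (nu : Real) (U : fps2) (u v : fps3) : Prop :=
  let UU := lift_xt U in
  (forall i j k,
     fadd (fadd (fmul u (dx u)) (fmul v (dy u))) (dt u) i j k
     = fadd (fadd (dt UU) (fmul UU (dx UU))) (fscale (nu%:C) (dy (dy u))) i j k)
  /\ (forall i j k, fadd (dx u) (dy v) i j k = 0).

Definition admissible (nu : Real) (U : fps2) (A1 : fps2) (u v : fps3) : Prop :=
  (forall i k, u i 0%N k = 0 /\ v i 0%N k = 0)
  /\ (forall i k, u i 1%N k = A1 i k)
  /\ prandtl nu U u v.

(* Main.v *)
Require Import Defs.
From mathcomp Require Import all_boot all_algebra complex.
From mathcomp Require Import Rstruct.
From mathcomp Require Import ring zify.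
From Stdlib Require Import FunctionalExtensionality.
Import GRing.Theory Num.Theory.
Local Open Scope ring_scope.
Local Open Scope complex_scope.

Section S.
Variables (nu : Real) (U : fps2) (A1 : fps2).

Definition Xg (P : fps3) i j k : Cplx :=
  P i (j - 2)%N k.+1 * (k.+1)%:R
  + \sum_(p < i.+1) \sum_(1 <= q < j - 2) \sum_(r < k.+1)
      (i - p + 1)%N%:R * P p q r * P (i - p + 1)%N (j - 2 - q)%N (k - r)%N
  - \sum_(p < i.+1) \sum_(2 <= q < j - 1) \sum_(r < k.+1)
      ((p.+1)%:R * (j - 1 - q)%N%:R / q%:R)
        * P p.+1 (q - 1)%N r * P (i - p)%N (j - 1 - q)%N (k - r)%N.

Definition gen (P : fps3) i j k : Cplx :=
  (nu%:C * j%:R * (j - 1)%N%:R)^-1 * Xg P i j k.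

Definition Usum i k : Cplx :=
  U i k.+1 * (k.+1)%:R
  + \sum_(p < i.+1) \sum_(q < k.+1)
      (i - p + 1)%N%:R * U p q * U (i - p + 1)%N (k - q)%N.

Definition rule (P : fps3) i j k : Cplx :=
  match j with
  | 0 => 0
  | 1 => A1 i k
  | 2 => - (2%:R * nu%:C)^-1 * Usum i k
  | _.+3 => gen P i j k
  end.

Lemma rule_ext P Q i j k :
  (forall i' j' k', (j' < j)%N -> P i' j' k' = Q i' j' k') ->
  rule P i j k = rule Q i j k.
Proof.
move=> H; case: j H => [|[|[|n]]] H //=.
rewrite /gen /Xg; congr (_ * (_ + _ - _)).
- by rewrite H //; lia.
- apply: eq_bigr => p _; apply: eq_big_nat => q /andP[q1 q2].
  apply: eq_bigr => r _; rewrite !H //; lia.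
- apply: eq_bigr => p _; apply: eq_big_nat => q /andP[q1 q2].
  apply: eq_bigr => r _; rewrite !H //; lia.
Qed.

Fixpoint approx n : fps3 :=
  match n with
  | 0 => fun _ _ _ => 0
  | n'.+1 => fun i j k => if j == n' then rule (approx n') i j k else approx n' i j k
  end.

Lemma approx_ok n i j k : (j < n)%N -> approx n i j k = approx j.+1 i j k.
Proof.
elim: n => [//|n IH] hj.
change (approx n.+1 i j k) with (if j == n then rule (approx n) i j k else approx n i j k).
have [->|hne] := eqVneq j n; first by rewrite /= eqxx.
rewrite IH //; lia.
Qed.

Definition Asol : fps3 := fun i j k => approx j.+1 i j k.

Lemma Asol_rule i j k : Asol i j k = rule Asol i j k.
Proof.
rewrite /Asol /= eqxx; apply: rule_ext => i' j' k' h.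
by rewrite approx_ok.
Qed.

Definition Bof (u : fps3) : fps3 := fun i j k =>
  if (j <= 1)%N then 0 else - ((i.+1)%:R / j%:R) * u i.+1 (j - 1)%N k.

End S.

Lemma h1 (u : fps3) i n k : (forall i k, u i 0%N k = 0) ->
  fmul u (dx u) i n.+1 k =
  \sum_(p < i.+1) \sum_(1 <= q < n.+1) \sum_(r < k.+1)
      (i - p + 1)%N%:R * u p q r * u (i - p + 1)%N (n.+1 - q)%N (k - r)%N.
Proof.
move=> hu; rewrite /fmul; apply: eq_bigr => a _.
rewrite big_ord_recl big1 ?add0r; last by move=> c _; rewrite hu mul0r.
rewrite big_ord_recr /= [X in _ + X = _]big1 ?addr0; last first.
  by move=> c _; rewrite /dx /bump /= add1n subnn hu !mulr0.
rewrite big_add1 big_mkord /=; apply: eq_bigr => b _; apply: eq_bigr => c _.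
rewrite /dx /bump /= add1n addn1; ring.
Qed.

Lemma h2 (u v : fps3) i n k : (forall i k, u i 0%N k = 0) ->
  (forall i j k, v i j k = Bof u i j k) ->
  fmul v (dy u) i n.+1 k =
  - \sum_(p < i.+1) \sum_(2 <= q < n.+2) \sum_(r < k.+1)
                 ((p.+1)%:R * (n.+2 - q)%N%:R / q%:R)
                   * u p.+1 (q - 1)%N r * u (i - p)%N (n.+2 - q)%N (k - r)%N.
Proof.
move=> hu hv; rewrite /fmul -sumrN; apply: eq_bigr => a _.
rewrite big_ord_recl big1 ?add0r; last by move=> c _; rewrite hv /Bof /= mul0r.
rewrite big_ord_recl big1 ?add0r; last by move=> c _; rewrite hv /Bof /= mul0r.
rewrite big_add1 big_add1 big_mkord /= -sumrN; apply: eq_bigr => b _.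
rewrite -sumrN; apply: eq_bigr => c _.
rewrite hv /Bof /dy /bump /= !add1n.
have -> : ((n.+1 - b.+2).+1 = n.+2 - b.+2)%N by have := ltn_ord b; lia.
rewrite subn1 /=; ring.
Qed.

Lemma momL (u v : fps3) i n k : (forall i k, u i 0%N k = 0) ->
  (forall i j k, v i j k = Bof u i j k) ->
  fadd (fadd (fmul u (dx u)) (fmul v (dy u))) (dt u) i n.+1 k = Xg u i n.+3 k.
Proof.
move=> hu hv; rewrite /fadd /Xg (h1 u i n k hu) (h2 u v i n k hu hv).
have -> : (n.+3 - 2 = n.+1)%N by lia.
have -> : (n.+3 - 1 = n.+2)%N by lia.
rewrite /dt.
ring.
Qed.


Lemma mom0L (u v : fps3) i k : (forall i k, u i 0%N k = 0) ->
  (forall i k, v i 0%N k = 0) ->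
  fadd (fadd (fmul u (dx u)) (fmul v (dy u))) (dt u) i 0 k = 0.
Proof.
move=> hu hv; rewrite /fadd /fmul /dt hu mulr0 addr0.
rewrite !big1 ?addr0 // => a _; rewrite big_ord1 big1 // => c _.
  by rewrite hv mul0r.
by rewrite hu mul0r.
Qed.

Lemma mom0R nu U (u : fps3) i k :
  fadd (fadd (dt (lift_xt U)) (fmul (lift_xt U) (dx (lift_xt U))))
       (fscale (nu%:C) (dy (dy u))) i 0 k
  = Usum U i k + nu%:C * 2%:R * u i 2 k.
Proof.
rewrite /fadd /fscale /dt /dy /fmul /Usum /lift_xt /=.
congr (_ + _ + _); first by rewrite mulrC.
  apply: eq_bigr => a _; rewrite big_ord1 /=; apply: eq_bigr => c _.
  by rewrite /dx /= addn1; ring.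
ring.
Qed.

Lemma momR nu U (u : fps3) i n k :
  fadd (fadd (dt (lift_xt U)) (fmul (lift_xt U) (dx (lift_xt U))))
       (fscale (nu%:C) (dy (dy u))) i n.+1 k
  = nu%:C * (n.+3%:R * n.+2%:R) * u i n.+3 k.
Proof.
rewrite /fadd /fscale /dt /dy /fmul /lift_xt /= mulr0 add0r big1 ?add0r; last first.
  move=> a _; apply: big1 => b _; apply: big1 => c _.
  case: eqP => hb; last by rewrite mul0r.
  by rewrite /dx hb subn0 /= !mulr0.
ring.
Qed.

Lemma solve1 {c x X : Cplx} : c != 0 -> 0 = X + c * x -> x = - c^-1 * X.
Proof.
move=> cn /esym /eqP; rewrite addrC addr_eq0 => /eqP h.
by rewrite -(mulKf cn x) h mulrN mulNr.
Qed.

Lemma solve2 {c x Y : Cplx} : c != 0 -> Y = c * x -> x = c^-1 * Y.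
Proof. by move=> cn ->; rewrite mulKf. Qed.

Lemma nuC_neq0 (nu : Real) : 0 < nu -> nu%:C != 0 :> Cplx.
Proof.
move=> h; have : (0%:C < nu%:C) by rewrite ltcR.
by move/lt0r_neq0.
Qed.

Theorem mainTheorem2 (nu : Real) (hnu : 0 < nu) (U : fps2) (A1 : fps2) :
  exists (A B : fps3),
    admissible nu U A1 A B
    /\ (forall A' B' : fps3, admissible nu U A1 A' B' -> A' = A /\ B' = B)
    /\ (forall i k, B i 1%N k = 0)
    /\ (forall i k,
          A i 2%N k =
            - (2%:R * nu%:C)^-1 *
              (U i k.+1 * (k.+1)%:R
               + \sum_(p < i.+1) \sum_(q < k.+1)
                   (i - p + 1)%N%:R * U p q * U (i - p + 1)%N (k - q)%N))
    /\ (forall i k, A i 3%N k = (k.+1)%:R * A i 1%N k.+1 / (6%:R * nu%:C))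
    /\ (forall i j k, (2 <= j)%N ->
          B i j k = - ((i.+1)%:R / j%:R) * A i.+1 (j - 1)%N k)
    /\ (forall i j k, (4 <= j)%N ->
          A i j k =
            (nu%:C * j%:R * (j - 1)%N%:R)^-1 *
            (A i (j - 2)%N k.+1 * (k.+1)%:R
             + \sum_(p < i.+1) \sum_(1 <= q < j - 2) \sum_(r < k.+1)
                 (i - p + 1)%N%:R * A p q r * A (i - p + 1)%N (j - 2 - q)%N (k - r)%N
             - \sum_(p < i.+1) \sum_(2 <= q < j - 1) \sum_(r < k.+1)
                 ((p.+1)%:R * (j - 1 - q)%N%:R / q%:R)
                   * A p.+1 (q - 1)%N r * A (i - p)%N (j - 1 - q)%N (k - r)%N)).
Proof.
have nz := nuC_neq0 nu hnu.
set A := Asol nu U A1.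
have hAr : forall i j k, A i j k = rule nu U A1 A i j k by move=> *; apply: Asol_rule.
have hA0 : forall i k, A i 0%N k = 0 by move=> i k; rewrite hAr.
exists A, (Bof A).
have hadm : admissible nu U A1 A (Bof A).
  split; first by move=> i k; rewrite hA0.
  split; first by move=> i k; rewrite hAr.
  split.
  - move=> i [|n] k.
    + rewrite mom0L // mom0R hAr /=.
      field; rewrite ?nz -?natrD ?pnatr_eq0 //.
    + rewrite (momL A (Bof A) i n k hA0) ?momR // [A i n.+3 k]hAr /= /gen.
      have -> : (n.+3 - 1 = n.+2)%N by lia.
      field; rewrite ?nz -?natrD ?pnatr_eq0 //.
  - move=> i [|j] k; rewrite /fadd /dx /dy /Bof /=.
      by rewrite hA0 !mulr0 addr0.
    rewrite subn1 /=; field; rewrite -?natrD ?pnatr_eq0 //.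
split; first exact: hadm.
split.
  move=> A' B' [h0 [h1' [hm hc]]].
  have hu' : forall i k, A' i 0%N k = 0 by move=> i k; case: (h0 i k).
  have hv' : forall i k, B' i 0%N k = 0 by move=> i k; case: (h0 i k).
  have hB : forall i j k, B' i j k = Bof A' i j k.
    move=> i [|[|j]] k; rewrite /Bof /=.
    - exact: hv'.
    - have := hc i 0%N k; rewrite /fadd /dx /dy hu' mulr0 add0r => h.
      by rewrite -[B' i 1%N k]mul1r.
    - have := hc i j.+1 k; rewrite /fadd /dx /dy => h.
      rewrite subn1 /= (solve1 _ (esym h)) ?pnatr_eq0 //; ring.
  have hA : forall j i k, A' i j k = A i j k.
    elim/ltn_ind => j IH i k.
    have -> : A' i j k = rule nu U A1 A' i j k.
      case: j IH => [|[|[|n]]] IH /=.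
      - exact: hu'.
      - exact: h1'.
      - have := hm i 0%N k; rewrite mom0L // mom0R => h.
        rewrite (solve1 _ h); first by rewrite [nu%:C * 2]mulrC.
        by apply: mulf_neq0; rewrite // pnatr_eq0.
      - have := hm i n.+1 k; rewrite (momL A' B' i n k hu' hB) momR => h.
        rewrite /gen; have -> : (n.+3 - 1 = n.+2)%N by lia.
        rewrite (solve2 _ h) ?mulrA //.
        by apply: mulf_neq0; [apply: mulf_neq0|]; rewrite // pnatr_eq0.
    rewrite (@rule_ext nu U A1 A' A); first by rewrite [RHS]hAr.
    by move=> i' j' k' hj; apply: IH.
  have eA : A' = A.
    by apply: functional_extensionality => i; apply: functional_extensionality => j;
      apply: functional_extensionality => k; apply: hA.
  split => //; subst A'.
  by apply: functional_extensionality => i; apply: functional_extensionality => j;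
      apply: functional_extensionality => k; apply: hB.
split; first by move=> i k; rewrite /Bof.
split; first by move=> i k; rewrite hAr.
split.
  move=> i k; rewrite hAr /= /gen /Xg.
  have -> : (3 - 2 = 1)%N by [].
  have -> : (3 - 1 = 2)%N by [].
  rewrite (eq_bigr (fun _ => 0)); last by move=> p _; rewrite big_geq.
  rewrite [X in _ - X](eq_bigr (fun _ => 0)); last by move=> p _; rewrite big_geq.
  rewrite !big1_eq; field; rewrite ?nz -?natrD ?pnatr_eq0 //.
split; first by move=> i [|[|j]] k.
by move=> i [|[|[|[|n]]]] k // _; rewrite hAr.
Qed.
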